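(* Let $T$ be a spanning tree, $\mathbf x\in\mathbb R^V$, and $\mathbf b$ a supply vector, and let $\mathbf f_{T,\mathbf x}$ be the associated tree-defined flow. Then $$\mathrm{gap}(\mathbf f_{T,\mathbf x},\mathbf x)=\frac12\sum_{(i,j)\in T}r(i,j)\cdot\frac{\Delta(C(i,j))^2}{R(C(i,j))^2}.$$
   Context: $G=(V,E)$ is a connected undirected graph with resistances $r(e)>0$; $\mathbf b\in\mathbb R^V$ with $\sum_ib(i)=0$; a $\mathbf b$-flow has net outflow $b(i)$ at every $i$ (with $f(j,i)=-f(i,j)$). $\mathcal E(\mathbf f)=\frac12\sum_e r(e)f(e)^2$, $\mathcal B(\mathbf x)=\mathbf b^\top\mathbf x-\frac12\mathbf x^\top\mathbf L\mathbf x$ with $\mathbf L$ the weighted Laplacian $\sum_{ij\in E}\frac1{r(i,j)}(\mathbf e_i-\mathbf e_j)(\mathbf e_i-\mathbf e_j)^\top$, and $\mathrm{gap}(\mathbf f,\mathbf x)=\mathcal E(\mathbf f)-\mathcal B(\mathbf x)$. Root $T$ and direct tree edges toward the root; for a tree edge $(i,j)$, $C(i,j)$ is the vertex set of the component of $T-ij$ containing $i$. For $C\subset V$: $R(C)=(\sum_{e\in\delta(C)}1/r(e))^{-1}$ with $\delta(C)$ the edges with exactly one endpoint in $C$, $b(C)=\sum_{v\in C}b(v)$, $f(C)=\sum_{kl\in E,\,k\in C,\,l\notin C}\frac{x(k)-x(l)}{r(k,l)}$, and $\Delta(C)=(b(C)-f(C))R(C)$. The tree-defined flow $\mathbf f_{T,\mathbf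 x}$ equals $\frac{x(i)-x(j)}{r(i,j)}$ on non-tree edges and, on tree edges, takes the unique values making it a $\mathbf b$-flow. *)

(* Defs.v *)
(* Graph G = (V, E) given by a finite edge type E with a
   reference orientation src e -> dst e for each undirected edge. *)
From HB Require Import structures.
From mathcomp Require Import all_boot all_order all_algebra.
Set Implicit Arguments. Unset Strict Implicit. Unset Printing Implicit Defensive.
Import Order.TTheory GRing.Theory Num.Theory.
Local Open Scope ring_scope.

Section Defs.
Variables (R : realFieldType) (V E : finType) (src dst : E -> V).

Definition sadj (S : {set E}) : rel V :=
  fun u w => [exists e in S, ((src e == u) && (dst e == w))
                          || ((src e == w) && (dst e == u))].

Definition conn (S : {set E}) (u w : V) : bool := connect (sadj S) u w.

Definition simple_graph : Prop :=
  (forall e, src e != dst e) /\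
  (forall e1 e2, ((src e1 == src e2) && (dst e1 == dst e2))
              || ((src e1 == dst e2) && (dst e1 == src e2)) -> e1 = e2).

(* T is a spanning tree: connected on all of V and acyclic (no edge of T
   lies on a cycle of T, i.e. its endpoints are disconnected in T - e). *)
Definition spanning_tree (T : {set E}) : Prop :=
  (forall u w, conn T u w) /\
  (forall e, e \in T -> ~~ conn (T :\ e) (src e) (dst e)).

Definition child (T : {set E}) (rho : V) (e : E) : V :=
  if conn (T :\ e) rho (src e) then dst e else src e.

(* C(i,j): vertex set of the component of T - ij containing i (the child) *)
Definition Ccomp (T : {set E}) (rho : V) (e : E) : {set V} :=
  [set v | conn (T :\ e) (child T rho e) v].

Definition cut (C : {set V}) (e : E) : bool := (src e \in C) != (dst e \in C).

Definition Rcut (r : E -> R) (C : {set V}) : R :=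
  (\sum_(e | cut C e) (r e)^-1)^-1.

Definition bset (b : V -> R) (C : {set V}) : R := \sum_(v in C) b v.

Definition fset (r : E -> R) (x : V -> R) (C : {set V}) : R :=
  \sum_(e | (src e \in C) && (dst e \notin C)) (x (src e) - x (dst e)) / r e
  + \sum_(e | (dst e \in C) && (src e \notin C)) (x (dst e) - x (src e)) / r e.

Definition Delta (r : E -> R) (b x : V -> R) (C : {set V}) : R :=
  (bset b C - fset r x C) * Rcut r C.

(* f (given on the reference orientation src -> dst) is a b-flow *)
Definition is_bflow (b : V -> R) (f : E -> R) : Prop :=
  forall v, \sum_(e | src e == v) f e - \sum_(e | dst e == v) f e = b v.

Definition energy (r : E -> R) (f : E -> R) : R :=
  2^-1 * \sum_e r e * f e ^+ 2.

(* weighted Laplacian L = sum_e 1/r(e) (e_i - e_j)(e_i - e_j)^T, as a V x V array *)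
Definition lap (r : E -> R) (u w : V) : R :=
  \sum_e (r e)^-1 * (((src e == u)%:R - (dst e == u)%:R)
                    * ((src e == w)%:R - (dst e == w)%:R)).

Definition dualB (r : E -> R) (b x : V -> R) : R :=
  \sum_v b v * x v - 2^-1 * \sum_u \sum_w x u * lap r u w * x w.

Definition gap (r : E -> R) (b x : V -> R) (f : E -> R) : R :=
  energy r f - dualB r b x.

(* f is the tree-defined flow f_{T,x}: it equals (x(i)-x(j))/r(i,j) on
   non-tree edges and is a b-flow (this determines it uniquely on T). *)
Definition tree_defined_flow (r : E -> R) (b x : V -> R) (T : {set E})
  (f : E -> R) : Prop :=
  (forall e, e \notin T -> f e = (x (src e) - x (dst e)) / r e) /\ is_bflow b f.

End Defs.

(* Main.v *)
Require Import Defs.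
From mathcomp Require Import all_boot all_order all_algebra.
From mathcomp Require Import ring lra.
Import Order.TTheory GRing.Theory Num.Theory.
Local Open Scope ring_scope.

Section Helpers.
Variables (R : realFieldType) (V E : finType) (src dst : E -> V).

Lemma sadj_sym (S : {set E}) : symmetric (sadj src dst S).
Proof.
move=> u w; rewrite /sadj; apply: eq_existsb => e; by rewrite orbC.
Qed.

Lemma conn_sym (S : {set E}) u w : conn src dst S u w = conn src dst S w u.
Proof. rewrite /conn; exact: (sym_connect_sym (@sadj_sym S) u w). Qed.

Lemma sum_ind (H : V -> R) (a : V) : \sum_u H u * (a == u)%:R = H a.
Proof.
rewrite (bigD1 a) //= eqxx mulr1 big1 ?addr0 // => u /negPf.
by rewrite eq_sym => ->; rewrite mulr0.
Qed.

Lemma fiber_sum (p : E -> V) (G : E -> R) (H : V -> R) :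
  \sum_v H v * \sum_(e | p e == v) G e = \sum_e H (p e) * G e.
Proof.
rewrite [RHS](partition_big p predT) //=; apply: eq_bigr => v _.
rewrite mulr_sumr; apply: eq_big => // e /eqP ->; done.
Qed.

Lemma quad_lap (r : E -> R) (x : V -> R) :
  \sum_u \sum_w x u * lap src dst r u w * x w
  = \sum_e (r e)^-1 * (x (src e) - x (dst e)) ^+ 2.
Proof.
have hd : forall e, \sum_u x u * ((src e == u)%:R - (dst e == u)%:R)
                    = x (src e) - x (dst e).
  by move=> e; under eq_bigr => u _ do rewrite mulrBr; rewrite sumrB !sum_ind.
rewrite /lap.
under eq_bigr => u _ do under eq_bigr => w _ do rewrite mulr_sumr. under eq_bigr => u _ do under eq_bigr => w _ do rewrite mulr_suml.
under eq_bigr => u _ do rewrite exchange_big.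
rewrite exchange_big; apply: eq_bigr => e _.
rewrite -hd expr2 mulr_suml mulr_sumr; apply: eq_bigr => u _.
rewrite mulr_sumr mulr_sumr; apply: eq_bigr => w _; ring.
Qed.

Lemma bx_flow (b x : V -> R) (f : E -> R) : is_bflow src dst b f ->
  \sum_v b v * x v = \sum_e f e * (x (src e) - x (dst e)).
Proof.
move=> fl.
under eq_bigr => v _ do rewrite -(fl v) mulrC mulrBr.
rewrite sumrB !fiber_sum -sumrB; apply: eq_bigr => e _; ring.
Qed.


Lemma Ccomp_cut (T : {set E}) rho e :
  (forall e, e \in T -> ~~ conn src dst (T :\ e) (src e) (dst e)) -> e \in T ->
  (src e \in Ccomp src dst T rho e) != (dst e \in Ccomp src dst T rho e).
Proof.
move=> ac eT; have := ac e eT; rewrite /Ccomp !inE /child.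
case: ifP => _ h.
  by rewrite conn_sym (negbTE h) /conn connect0.
by rewrite (negbTE h) /conn connect0.
Qed.

Lemma Ccomp_other (T : {set E}) rho e e' : e' \in T -> e' != e ->
  (src e' \in Ccomp src dst T rho e) = (dst e' \in Ccomp src dst T rho e).
Proof.
move=> e'T ne.
have h : sadj src dst (T :\ e) (src e') (dst e').
  by apply/existsP; exists e'; rewrite in_setD1 ne e'T !eqxx.
rewrite /Ccomp !inE /conn; apply/idP/idP => H.
  exact: connect_trans H (connect1 h).
by apply: connect_trans H (connect1 _); rewrite sadj_sym.
Qed.

End Helpers.

Theorem mainTheorem11 (R : realFieldType) (V E : finType) (src dst : E -> V)
  (r : E -> R) (b x : V -> R) (T : {set E}) (rho : V) (f : E -> R) :
  simple_graph src dst ->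
  (forall u w, conn src dst [set: E] u w) ->
  (forall e, 0 < r e) ->
  \sum_v b v = 0 ->
  spanning_tree src dst T ->
  tree_defined_flow src dst r b x T f ->
  gap src dst r b x f =
  2^-1 * \sum_(e in T) r e * (Delta src dst r b x (Ccomp src dst T rho e) ^+ 2
                               / Rcut src dst r (Ccomp src dst T rho e) ^+ 2).
Proof.
move=> _ _ rpos _ [_ ac] [fnT fl].
have rn0 : forall e, r e != 0 by move=> e; rewrite gt_eqF.
pose d e := x (src e) - x (dst e).
pose fx e := d e / r e.
have gapE : gap src dst r b x f = 2^-1 * \sum_e r e * (f e - fx e) ^+ 2.
  rewrite /gap /energy /dualB quad_lap (@bx_flow _ _ _ src dst b x f fl).
  have pw : forall e, r e * (f e - fx e) ^+ 2
     = r e * f e ^+ 2 + ((-2) * (f e * d e) + (r e)^-1 * d e ^+ 2).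
    by move=> e; rewrite /fx; field; exact: rn0.
  rewrite (eq_bigr _ (fun e _ => pw e)) !big_split /= -mulr_sumr /d.
  set A := \sum_e _. set B := \sum_i _. set Cs := \sum_i _. lra.
rewrite gapE; congr (2^-1 * _).
rewrite (bigID (fun e => e \in T)) /= [X in _ + X]big1 ?addr0; last first.
  by move=> e /fnT ->; rewrite /fx /d subrr expr2 !mulr0.
apply: eq_bigr => e eT.
have hcut : (src e \in Ccomp src dst T rho e) != (dst e \in Ccomp src dst T rho e) by apply: Ccomp_cut.
have hoth : forall e', e' \in T -> e' != e ->
   (src e' \in Ccomp src dst T rho e) = (dst e' \in Ccomp src dst T rho e).
  by move=> e' h1 h2; apply: Ccomp_other.
set C := Ccomp src dst T rho e in hcut hoth *.
have Rc0 : Rcut src dst r C != 0.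
  rewrite /Rcut invr_eq0 gt_eqF // (bigD1 e) //=.
  have h1 : 0 < (r e)^-1 by rewrite invr_gt0.
  have h2 : 0 <= \sum_(i | cut src dst C i && (i != e)) (r i)^-1.
    by apply: sumr_ge0 => i _; rewrite invr_ge0 ltW.
  lra.
rewrite /Delta exprMn mulfK ?expf_neq0 //.
congr (r e * _).
pose c e' := ((src e' \in C)%:R - (dst e' \in C)%:R : R).
have hb : bset b C = \sum_e' c e' * f e'.
  transitivity (\sum_v ((v \in C)%:R * (\sum_(e | src e == v) f e)
                        - (v \in C)%:R * \sum_(e | dst e == v) f e)).
    rewrite /bset big_mkcond; apply: eq_bigr => v _; rewrite -mulrBr fl.
    by case: (v \in C); rewrite ?mul1r ?mul0r.
  rewrite sumrB !fiber_sum -sumrB; apply: eq_bigr => e' _; rewrite /c; ring.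
have hf : fset src dst r x C = \sum_e' c e' * fx e'.
  rewrite /fset; transitivity (\sum_e'
     ((if (src e' \in C) && (dst e' \notin C) then (x (src e') - x (dst e')) / r e' else 0)
    + (if (dst e' \in C) && (src e' \notin C) then (x (dst e') - x (src e')) / r e' else 0))).
    by rewrite big_split /= -!big_mkcond.
  apply: eq_bigr => e' _.
  rewrite /c /fx /d.
  by case: (src e' \in C); case: (dst e' \in C) => /=; ring.
have key : bset b C - fset src dst r x C = c e * (f e - fx e).
  rewrite hb hf -sumrB (bigD1 e) //= big1 ?addr0; first by rewrite mulrBr.
  move=> e' ne; case: (boolP (e' \in T)) => [e'T | e'nT].
    by rewrite /c (hoth _ e'T ne) subrr !mul0r subrr.
  by rewrite fnT // /fx /d subrr.
rewrite key exprMn.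
have -> : c e ^+ 2 = 1.
  by move: hcut; rewrite /c; case: (src e \in C); case: (dst e \in C) => //= _; ring.
by rewrite mul1r.
Qed.
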